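(* In the Poincaré disk model of $\mathbb{H}^2\times\mathbb{R}=\{(x,y,z):x^2+y^2<1\}$, for $t\in\mathbb{R}$ let $$F_t(x,y,z)=\left(1+\frac{4(x-1)}{4+4ty+t^2((x-1)^2+y^2)},\ \frac{4y+2t((x-1)^2+y^2)}{4+4ty+t^2((x-1)^2+y^2)},\ z\right)$$ (a one-parameter group of isometries whose orbits are horocycles in slices, all asymptotic to $(1,0)\in\mathbb{S}^1_\infty$), and let $\psi(x,y)=\left(\frac{e^x-1}{e^x+1},0,y\right)$ be an isometric parametrization of the vertical plane $\{y=0\}$. Let $\mathcal{I}=(y_1,y_2)$ with $-\infty\le y_1<y_2\le+\infty$ and let $\rho:\mathcal{I}\to\mathbb{R}$ be a smooth function with $\rho''(y)>0$ for all $y\in\mathcal{I}$ and $\lim_{y\to y_1}\rho(y)=\lim_{y\to y_2}\rho(y)=+\infty$. Let $S_\rho$ be the surface parametrized by $f_\rho(y,t)=F_t(\psi(\rho(y),y))$, $y\in\mathcal{I}$, $t\in\mathbb{R}$. Then $S_\rho$ has extrinsic curvature $K=\rho''(y)/(1+\rho'(y)^2)^2>0$, and $S_\rho$ is a properly embedded surface in $\mathbb{H}^2\times\mathbb{R}$ with positive extrinsic curvature and a simple end.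
   Context: $\mathbb{H}^2$ is the Poincaré disk with metric $4(dx^2+dy^2)/(1-x^2-y^2)^2$ and $\mathbb{H}^2\times\mathbb{R}$ carries the product metric; extrinsic curvature $K=\det(II)/\det(I)$. With $\pi$ the vertical projection and $\partial_\infty$ the asymptotic boundary in $\mathbb{S}^1_\infty=\{x^2+y^2=1\}$, a surface $S$ has a simple end if $\partial_\infty\pi(S)$ is a single point $\theta_0$ and, for all $\theta_1,\theta_2\in\mathbb{S}^1_\infty\setminus\{\theta_0\}$, the intersection of $S$ with the vertical plane over the geodesic joining $\theta_1$ and $\theta_2$ is empty or compact. *)

(* Defs.v *)
From Stdlib Require Import Reals.
Open Scope R_scope.

Definition P3 : Type := (R * R * R)%type.
Definition c1 (p : P3) : R := fst (fst p).
Definition c2 (p : P3) : R := snd (fst p).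
Definition c3 (p : P3) : R := snd p.
Definition vadd (u w : P3) : P3 := (c1 u + c1 w, c2 u + c2 w, c3 u + c3 w).

Definition H2R (p : P3) : Prop := c1 p ^ 2 + c2 p ^ 2 < 1.

Definition lam2 (p : P3) : R := 4 / (1 - c1 p ^ 2 - c2 p ^ 2) ^ 2.
Definition gm (p : P3) (u w : P3) : R :=
  lam2 p * (c1 u * c1 w + c2 u * c2 w) + c3 u * c3 w.

(** Christoffel term of the Levi-Civita connection of gm:
    (nabla_U W)^k = U(W^k) + Gam p U W ^k.  The metric is conformal
    e^(2 phi)(dx^2+dy^2) + dz^2 with phi = ln (2/(1-x^2-y^2)), so
    Gam^k_ij = delta^k_i d_j phi + delta^k_j d_i phi - delta_ij d_k phi
    (horizontal indices only), d_k phi = 2 x_k / (1 - x^2 - y^2). *)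
Definition dphi1 (p : P3) : R := 2 * c1 p / (1 - c1 p ^ 2 - c2 p ^ 2).
Definition dphi2 (p : P3) : R := 2 * c2 p / (1 - c1 p ^ 2 - c2 p ^ 2).
Definition Gam (p : P3) (u w : P3) : P3 :=
  let ud := c1 u * dphi1 p + c2 u * dphi2 p in
  let wd := c1 w * dphi1 p + c2 w * dphi2 p in
  let uw := c1 u * c1 w + c2 u * c2 w in
  (ud * c1 w + wd * c1 u - uw * dphi1 p,
   ud * c2 w + wd * c2 u - uw * dphi2 p,
   0).

Definition vderiv3 (g : R -> P3) (x : R) (l : P3) : Prop :=
  derivable_pt_lim (fun s => c1 (g s)) x (c1 l) /\
  derivable_pt_lim (fun s => c2 (g s)) x (c2 l) /\
  derivable_pt_lim (fun s => c3 (g s)) x (c3 l).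

(** Fu, Fv, Fuu, Fuv, Fvv are the partial derivatives of f (unique on the open
    domain), N a unit normal (unique up to sign; det II does not depend on the
    sign), II_ij = g(nabla_{f_i} f_j, N). *)
Definition has_extrinsic_curvature (Dom : R -> R -> Prop) (f : R -> R -> P3)
    (K : R -> R -> R) : Prop :=
  exists Fu Fv Fuu Fuv Fvv : R -> R -> P3,
  forall u v, Dom u v ->
    vderiv3 (fun s => f s v) u (Fu u v) /\
    vderiv3 (fun s => f u s) v (Fv u v) /\
    vderiv3 (fun s => Fu s v) u (Fuu u v) /\
    vderiv3 (fun s => Fu u s) v (Fuv u v) /\
    vderiv3 (fun s => Fv u s) v (Fvv u v) /\
    let p := f u v in
    let E := gm p (Fu u v) (Fu u v) in
    let F := gm p (Fu u v) (Fv u v) in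
    let G := gm p (Fv u v) (Fv u v) in
    E * G - F ^ 2 <> 0 /\
    exists N : P3,
      gm p N N = 1 /\ gm p N (Fu u v) = 0 /\ gm p N (Fv u v) = 0 /\
      let L := gm p (vadd (Fuu u v) (Gam p (Fu u v) (Fu u v))) N in
      let M := gm p (vadd (Fuv u v) (Gam p (Fu u v) (Fv u v))) N in
      let Nn := gm p (vadd (Fvv u v) (Gam p (Fv u v) (Fv u v))) N in
      K u v = (L * Nn - M ^ 2) / (E * G - F ^ 2).

Definition cv2 (s : nat -> R * R) (l : R * R) : Prop :=
  Un_cv (fun n => fst (s n)) (fst l) /\ Un_cv (fun n => snd (s n)) (snd l).
Definition cv3 (s : nat -> P3) (l : P3) : Prop :=
  Un_cv (fun n => c1 (s n)) (c1 l) /\ Un_cv (fun n => c2 (s n)) (c2 l) /\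
  Un_cv (fun n => c3 (s n)) (c3 l).
Definition subseq_index (phi : nat -> nat) : Prop :=
  forall n, (phi n < phi (S n))%nat.
Definition compact2 (A : R * R -> Prop) : Prop :=
  forall s : nat -> R * R, (forall n, A (s n)) ->
  exists phi l, subseq_index phi /\ A l /\ cv2 (fun n => s (phi n)) l.
Definition compact3 (A : P3 -> Prop) : Prop :=
  forall s : nat -> P3, (forall n, A (s n)) ->
  exists phi l, subseq_index phi /\ A l /\ cv3 (fun n => s (phi n)) l.

Definition linindep (u w : P3) : Prop :=
  ~ (c2 u * c3 w - c3 u * c2 w = 0 /\ c3 u * c1 w - c1 u * c3 w = 0 /\
     c1 u * c2 w - c2 u * c1 w = 0).

Definition properly_embedded (Dom : R -> R -> Prop) (f : R -> R -> P3) : Prop :=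
  (forall u v, Dom u v -> H2R (f u v)) /\
  (forall u v u' v', Dom u v -> Dom u' v' -> f u v = f u' v' -> u = u' /\ v = v') /\
  (exists Fu Fv : R -> R -> P3, forall u v, Dom u v ->
     vderiv3 (fun s => f s v) u (Fu u v) /\
     vderiv3 (fun s => f u s) v (Fv u v) /\
     linindep (Fu u v) (Fv u v)) /\
  (forall (s : nat -> R * R) (p : R * R),
     (forall n, Dom (fst (s n)) (snd (s n))) -> Dom (fst p) (snd p) ->
     cv3 (fun n => f (fst (s n)) (snd (s n))) (f (fst p) (snd p)) -> cv2 s p) /\
  (forall A : P3 -> Prop, (forall q, A q -> H2R q) -> compact3 A ->
     compact2 (fun p => Dom (fst p) (snd p) /\ A (f (fst p) (snd p)))).

Definition on_circle (th : R * R) : Prop := fst th ^ 2 + snd th ^ 2 = 1.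

Definition asym_boundary (A : R * R -> Prop) (th : R * R) : Prop :=
  on_circle th /\ exists s : nat -> R * R, (forall n, A (s n)) /\ cv2 s th.

(** The geodesic of the disk joining distinct a, b in S^1_infty:
    the generalized circle orthogonal to S^1 through a and b, i.e.
    cross(a,b) (|p|^2 + 1) = 2 p . J(a - b), J(w1,w2) = (-w2,w1)
    (for antipodal a,b this is the diameter). *)
Definition geodesic (a b : R * R) (p : R * R) : Prop :=
  fst p ^ 2 + snd p ^ 2 < 1 /\
  (fst a * snd b - snd a * fst b) * (fst p ^ 2 + snd p ^ 2 + 1) =
  2 * (- fst p * (snd a - snd b) + snd p * (fst a - fst b)).

Definition vplane (a b : R * R) (q : P3) : Prop := geodesic a b (c1 q, c2 q).

Definition image (Dom : R -> R -> Prop) (f : R -> R -> P3) (q : P3) : Prop :=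
  exists u v, Dom u v /\ f u v = q.

Definition simple_end (Dom : R -> R -> Prop) (f : R -> R -> P3) : Prop :=
  exists th0 : R * R,
    (forall th, asym_boundary (fun p => exists q, image Dom f q /\ (c1 q, c2 q) = p) th
                <-> th = th0) /\
    forall th1 th2, on_circle th1 -> on_circle th2 ->
      th1 <> th0 -> th2 <> th0 -> th1 <> th2 ->
      (forall q, ~ (image Dom f q /\ vplane th1 th2 q)) \/
      compact3 (fun q => image Dom f q /\ vplane th1 th2 q).

Definition Ft (t : R) (p : P3) : P3 :=
  let x := c1 p in let y := c2 p in
  let d := 4 + 4 * t * y + t ^ 2 * ((x - 1) ^ 2 + y ^ 2) in
  (1 + 4 * (x - 1) / d, (4 * y + 2 * t * ((x - 1) ^ 2 + y ^ 2)) / d, c3 p).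

Definition psi (x y : R) : P3 := ((exp x - 1) / (exp x + 1), 0, y).

Definition f_rho (rho : R -> R) (y t : R) : P3 := Ft t (psi (rho y) y).

(** Interval (y1,y2) with y1 in R u {-oo} (None = -oo), y2 in R u {+oo}
    (None = +oo). *)
Definition in_I (y1 y2 : option R) (y : R) : Prop :=
  (match y1 with Some a => a < y | None => True end) /\
  (match y2 with Some b => y < b | None => True end).
Definition ext_lt (y1 y2 : option R) : Prop :=
  match y1, y2 with Some a, Some b => a < b | _, _ => True end.

Definition tends_infty_left (y1 y2 : option R) (rho : R -> R) : Prop :=
  forall M : R,
    match y1 with
    | Some a => exists d, 0 < d /\ forall y, in_I y1 y2 y -> y < a + d -> M < rho y
    | None => exists N, forall y, in_I y1 y2 y -> y < N -> M < rho y
    end.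
Definition tends_infty_right (y1 y2 : option R) (rho : R -> R) : Prop :=
  forall M : R,
    match y2 with
    | Some b => exists d, 0 < d /\ forall y, in_I y1 y2 y -> b - d < y -> M < rho y
    | None => exists N, forall y, in_I y1 y2 y -> N < y -> M < rho y
    end.

(* Main.v *)
Require Import Defs.
From Stdlib Require Import Reals Lra Lia IndefiniteDescription.
Open Scope R_scope.

Definition rr E t := (E+1)^2 + t^2.
Definition AA E t := (E+1)^2 - t^2.
Definition BB E t := 2*t*(E+1).
Definition CC E t := (E+1)*AA E t - t*BB E t.
Definition DD E t := (E+1)*BB E t + t*AA E t.
Definition Xf E t := 1 - 2*(E+1)/rr E t.
Definition Yf E t := 2*t/rr E t.
Definition XE E t := 2*AA E t/rr E t^2.
Definition YE E t := -2*BB E t/rr E t^2.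
Definition Xt E t := 2*BB E t/rr E t^2.
Definition Yt E t := 2*AA E t/rr E t^2.
Definition XEE E t := -4*CC E t/rr E t^3.
Definition YEE E t := 4*DD E t/rr E t^3.
Definition XEt E t := -4*DD E t/rr E t^3.
Definition YEt E t := -4*CC E t/rr E t^3.
Definition Xtt E t := 4*CC E t/rr E t^3.
Definition Ytt E t := -4*DD E t/rr E t^3.

Lemma rr_pos E t : 0 < E -> 0 < rr E t.
Proof. intros; unfold rr; nra. Qed.

Lemma one_minus E t : 0 < E -> 1 - Xf E t ^2 - Yf E t ^2 = 4*E/rr E t.
Proof. intros. pose proof (rr_pos E t H). unfold Xf, Yf.
unfold rr in *. field. lra. Qed.

Ltac unc := unfold Defs.c1, Defs.c2, Defs.c3 in *; cbn [fst snd] in *.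
Lemma lam2_eq E t z : 0 < E -> lam2 (Xf E t, Yf E t, z) = rr E t ^2/(4*E^2).
Proof. intros. pose proof (rr_pos E t H). unfold lam2; unc. rewrite one_minus by auto. field. lra. Qed.
Lemma dphi1_eq E t z : 0 < E -> dphi1 (Xf E t, Yf E t, z) = (rr E t - 2*(E+1))/(2*E).
Proof. intros. pose proof (rr_pos E t H). unfold dphi1; unc. rewrite one_minus by auto. unfold Xf. field. lra. Qed.
Lemma dphi2_eq E t z : 0 < E -> dphi2 (Xf E t, Yf E t, z) = t/E.
Proof. intros. pose proof (rr_pos E t H). unfold dphi2; unc. rewrite one_minus by auto. unfold Yf. field. lra. Qed.

Lemma rr2 E t : rr E t ^2 = AA E t^2 + BB E t^2.
Proof. unfold rr, AA, BB. ring. Qed.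

Definition Pp E t z : P3 := (Xf E t, Yf E t, z).
Definition FuA E t d1 : P3 := (E*d1*XE E t, E*d1*YE E t, 1).
Definition FvA E t : P3 := (Xt E t, Yt E t, 0).
Definition FuuA E t d1 d2 : P3 :=
  ((E*d1)^2*XEE E t + E*(d1^2+d2)*XE E t, (E*d1)^2*YEE E t + E*(d1^2+d2)*YE E t, 0).
Definition FuvA E t d1 : P3 := (E*d1*XEt E t, E*d1*YEt E t, 0).
Definition FvvA E t : P3 := (Xtt E t, Ytt E t, 0).
Definition n0A E t d1 : P3 := (E*XE E t, E*YE E t, -d1).
Definition scl (k : R) (u : P3) : P3 := (k * Defs.c1 u, k * Defs.c2 u, k * Defs.c3 u).

Ltac simp_metric H := unfold gm, Gam, vadd; unc;
  rewrite ?lam2_eq, ?dphi1_eq, ?dphi2_eq by exact H.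

Lemma gm_scl_l p k u w : gm p (scl k u) w = k * gm p u w.
Proof. unfold gm, scl; unc. ring. Qed.
Lemma gm_scl_r p k u w : gm p u (scl k w) = k * gm p u w.
Proof. unfold gm, scl; unc. ring. Qed.

Lemma gNN E t z d1 : 0 < E -> gm (Pp E t z) (n0A E t d1) (n0A E t d1) = 1 + d1^2.
Proof. intros HE. pose proof (rr_pos E t HE). unfold Pp, n0A. simp_metric HE.
 unfold XE, YE. assert (0 < AA E t^2 + BB E t^2) by (rewrite <- rr2; nra).
 rewrite rr2. field. lra. Qed.
Ltac prep E t HE := let H := fresh in pose proof (rr_pos E t HE) as H;
  unfold Pp, n0A, FuA, FvA, FuuA, FuvA, FvvA; simp_metric HE;
  unfold XE, YE, Xt, Yt, XEE, YEE, XEt, YEt, Xtt, Ytt, CC, DD;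
  unfold rr, AA, BB in *.

Lemma gNFu E t z d1 : 0 < E -> gm (Pp E t z) (n0A E t d1) (FuA E t d1) = 0.
Proof. intros HE. prep E t HE. field. lra. Qed.
Lemma gNFv E t z d1 : 0 < E -> gm (Pp E t z) (n0A E t d1) (FvA E t) = 0.
Proof. intros HE. prep E t HE. field. lra. Qed.
Lemma gEE E t z d1 : 0 < E -> gm (Pp E t z) (FuA E t d1) (FuA E t d1) = 1 + d1^2.
Proof. intros HE. prep E t HE. field. lra. Qed.
Lemma gFF E t z d1 : 0 < E -> gm (Pp E t z) (FuA E t d1) (FvA E t) = 0.
Proof. intros HE. prep E t HE. field. lra. Qed.
Lemma gGG E t z : 0 < E -> gm (Pp E t z) (FvA E t) (FvA E t) = 1/E^2.
Proof. intros HE. prep E t HE. field. lra. Qed.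
Lemma gL E t z d1 d2 : 0 < E ->
  gm (Pp E t z) (vadd (FuuA E t d1 d2) (Gam (Pp E t z) (FuA E t d1) (FuA E t d1))) (n0A E t d1) = d2.
intros HE. prep E t HE. field. lra. Qed.
Lemma gM E t z d1 : 0 < E ->
  gm (Pp E t z) (vadd (FuvA E t d1) (Gam (Pp E t z) (FuA E t d1) (FvA E t))) (n0A E t d1) = 0.
Proof. intros HE. prep E t HE. field. lra. Qed.
Lemma gN E t z d1 : 0 < E ->
  gm (Pp E t z) (vadd (FvvA E t) (Gam (Pp E t z) (FvA E t) (FvA E t))) (n0A E t d1) = 1/E^2.
Proof. intros HE. prep E t HE. field. lra. Qed.

From Coquelicot Require Import Coquelicot.

Lemma f_rho_eq rho y t : f_rho rho y t = Pp (exp (rho y)) t y.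
Proof. unfold f_rho, Ft, psi, Pp, Xf, Yf, rr; unc. pose proof (exp_pos (rho y)).
 f_equal. f_equal; field; split; try lra; nra. Qed.

Ltac drv := apply is_derive_Reals; auto_derive;
  [ unfold rr in *; repeat split; nra
  | unfold Xf, Yf, XE, YE, Xt, Yt, XEE, YEE, XEt, YEt, Xtt, Ytt, CC, DD, AA, BB, rr in *; field; nra ].

Lemma dXE E t : 0 < E -> derivable_pt_lim (fun e => Xf e t) E (XE E t). Proof. intros; unfold Xf, rr. drv. Qed.
Lemma dYE E t : 0 < E -> derivable_pt_lim (fun e => Yf e t) E (YE E t). Proof. intros; unfold Yf, rr. drv. Qed.
Lemma dXt E t : 0 < E -> derivable_pt_lim (fun s => Xf E s) t (Xt E t). Proof. intros; unfold Xf, rr. drv. Qed.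
Lemma dYt E t : 0 < E -> derivable_pt_lim (fun s => Yf E s) t (Yt E t). Proof. intros; unfold Yf, rr. drv. Qed.
Lemma dXEE E t : 0 < E -> derivable_pt_lim (fun e => XE e t) E (XEE E t). Proof. intros; unfold XE, AA, rr. drv. Qed.
Lemma dYEE E t : 0 < E -> derivable_pt_lim (fun e => YE e t) E (YEE E t). Proof. intros; unfold YE, BB, rr. drv. Qed.
Lemma dXEt E t : 0 < E -> derivable_pt_lim (fun s => XE E s) t (XEt E t). Proof. intros; unfold XE, AA, rr. drv. Qed.
Lemma dYEt E t : 0 < E -> derivable_pt_lim (fun s => YE E s) t (YEt E t). Proof. intros; unfold YE, BB, rr. drv. Qed.
Lemma dXtt E t : 0 < E -> derivable_pt_lim (fun s => Xt E s) t (Xtt E t). Proof. intros; unfold Xt, BB, rr. drv. Qed.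
Lemma dYtt E t : 0 < E -> derivable_pt_lim (fun s => Yt E s) t (Ytt E t). Proof. intros; unfold Yt, AA, rr. drv. Qed.

Lemma dpl_eq f x l l' : derivable_pt_lim f x l -> l = l' -> derivable_pt_lim f x l'.
Proof. intros H ->; exact H. Qed.

Lemma dcomp (h g : R -> R) y dg dh : derivable_pt_lim g y dg -> derivable_pt_lim h (g y) dh ->
  derivable_pt_lim (fun s => h (g s)) y (dh * dg).
Proof. intros. apply (derivable_pt_lim_comp g h); auto. Qed.

Lemma I_open y1 y2 y : in_I y1 y2 y -> exists a b, a < y < b /\ forall z, a < z < b -> in_I y1 y2 z.
Proof.
  unfold in_I; intros [H1 H2].
  destruct y1 as [a|]; destruct y2 as [b|].
  - exists a, b; split; [lra|]. intros; lra.
  - exists a, (y+1); split; [lra|]. intros; split; lra.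
  - exists (y-1), b; split; [lra|]. intros; split; lra.
  - exists (y-1), (y+1); split; [lra|]. intros; split; auto.
Qed.

Definition Ee (D : nat -> R -> R) y := exp (D 0%nat y).

Lemma dEe D y : derivable_pt_lim (D 0%nat) y (D 1%nat y) ->
  derivable_pt_lim (Ee D) y (Ee D y * D 1%nat y).
Proof. intros H. unfold Ee. apply (dcomp exp (D 0%nat)); auto. apply derivable_pt_lim_exp. Qed.

Lemma dEe1 D y : derivable_pt_lim (D 0%nat) y (D 1%nat y) -> derivable_pt_lim (D 1%nat) y (D 2%nat y) ->
  derivable_pt_lim (fun s => Ee D s * D 1%nat s) y (Ee D y * (D 1%nat y ^2 + D 2%nat y)).
Proof. intros H1 H2. eapply dpl_eq. apply derivable_pt_lim_mult; [apply dEe; auto | exact H2].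
  simpl; ring. Qed.

Lemma ext_rho y1 y2 (rho : R -> R) (D : nat -> R -> R)
  (HD0 : forall y, in_I y1 y2 y -> D 0%nat y = rho y) u (Hu : in_I y1 y2 u)
  (h : R -> R) l : derivable_pt_lim (fun s => h (Ee D s)) u l ->
  derivable_pt_lim (fun s => h (exp (rho s))) u l.
Proof.
  intros H. destruct (I_open _ _ _ Hu) as [a [b [Hab Hz]]].
  apply (derivable_pt_lim_locally_ext (fun s => h (Ee D s)) _ u a b l Hab); auto.
  intros z Hz'. unfold Ee. rewrite HD0; auto.
Qed.

Lemma Ee_pos D y : 0 < Ee D y.
Proof. apply exp_pos. Qed.

Lemma curv_part y1 y2 (rho : R -> R) (D : nat -> R -> R)
  (HD0 : forall y, in_I y1 y2 y -> D 0%nat y = rho y)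
  (HD : forall (n : nat) (y : R), in_I y1 y2 y ->
          derivable_pt_lim (D n) y (D (S n) y)) :
  has_extrinsic_curvature (fun y t : R => in_I y1 y2 y) (f_rho rho)
    (fun y t => D 2%nat y / (1 + D 1%nat y ^ 2) ^ 2).
Proof.
  exists (fun u v => FuA (Ee D u) v (D 1%nat u)), (fun u v => FvA (Ee D u) v),
    (fun u v => FuuA (Ee D u) v (D 1%nat u) (D 2%nat u)),
    (fun u v => FuvA (Ee D u) v (D 1%nat u)), (fun u v => FvvA (Ee D u) v).
  intros u v Hu.
  pose proof (Ee_pos D u) as HE.
  assert (Hrho : exp (rho u) = Ee D u) by (unfold Ee; rewrite HD0; auto).
  assert (H0 := HD 0%nat u Hu). assert (H1 := HD 1%nat u Hu).
  split; [|split; [|split; [|split; [|split]]]].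
  - unfold vderiv3; split; [|split].
    + apply (derivable_pt_lim_ext (fun s => Xf (exp (rho s)) v)).
      { intros; rewrite f_rho_eq; reflexivity. }
      apply (ext_rho y1 y2 rho D HD0 u Hu (fun e => Xf e v)).
      eapply dpl_eq. apply (dcomp (fun e => Xf e v) (Ee D)). apply dEe; auto. apply dXE; auto.
      unfold FuA; unc; ring.
    + apply (derivable_pt_lim_ext (fun s => Yf (exp (rho s)) v)).
      { intros; rewrite f_rho_eq; reflexivity. }
      apply (ext_rho y1 y2 rho D HD0 u Hu (fun e => Yf e v)).
      eapply dpl_eq. apply (dcomp (fun e => Yf e v) (Ee D)). apply dEe; auto. apply dYE; auto.
      unfold FuA; unc; ring.
    + apply (derivable_pt_lim_ext (fun s => s)).
      { intros; rewrite f_rho_eq; reflexivity. }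
      apply derivable_pt_lim_id.
  - unfold vderiv3; split; [|split].
    + apply (derivable_pt_lim_ext (fun s => Xf (Ee D u) s)).
      { intros; rewrite f_rho_eq, Hrho; reflexivity. }
      apply dXt; auto.
    + apply (derivable_pt_lim_ext (fun s => Yf (Ee D u) s)).
      { intros; rewrite f_rho_eq, Hrho; reflexivity. }
      apply dYt; auto.
    + apply (derivable_pt_lim_ext (fun s => u)).
      { intros; rewrite f_rho_eq; reflexivity. }
      apply derivable_pt_lim_const.
  - unfold vderiv3; split; [|split].
    + eapply dpl_eq.
      apply (derivable_pt_lim_mult (fun s => Ee D s * D 1%nat s) (fun s => XE (Ee D s) v)).
      apply dEe1; auto.
      apply (dcomp (fun e => XE e v) (Ee D)). apply dEe; auto. apply dXEE; auto.
      unfold FuuA; unc; ring.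
    + eapply dpl_eq.
      apply (derivable_pt_lim_mult (fun s => Ee D s * D 1%nat s) (fun s => YE (Ee D s) v)).
      apply dEe1; auto.
      apply (dcomp (fun e => YE e v) (Ee D)). apply dEe; auto. apply dYEE; auto.
      unfold FuuA; unc; ring.
    + apply derivable_pt_lim_const.
  - unfold vderiv3; split; [|split].
    + eapply dpl_eq.
      apply (derivable_pt_lim_scal (fun s => XE (Ee D u) s) (Ee D u * D 1%nat u)).
      apply dXEt; auto. unfold FuvA; unc; ring.
    + eapply dpl_eq.
      apply (derivable_pt_lim_scal (fun s => YE (Ee D u) s) (Ee D u * D 1%nat u)).
      apply dYEt; auto. unfold FuvA; unc; ring.
    + apply derivable_pt_lim_const.
  - unfold vderiv3; split; [|split].
    + apply dXtt; auto.
    + apply dYtt; auto.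
    + apply derivable_pt_lim_const.
  - cbv beta zeta. rewrite f_rho_eq, Hrho.
    set (E := Ee D u) in *. set (d1 := D 1%nat u). set (d2 := D 2%nat u).
    rewrite gEE, gFF, gGG by auto.
    split.
    + intro Hc. assert (0 < (1 + d1^2) * (1/E^2)).
      { apply Rmult_lt_0_compat. nra. apply Rdiv_lt_0_compat; [lra| nra]. }
      nra.
    + set (s := sqrt (1 + d1^2)).
      assert (Hs : s * s = 1 + d1^2) by (apply sqrt_sqrt; nra).
      assert (Hs0 : 0 < s) by (apply sqrt_lt_R0; nra).
      exists (scl (1/s) (n0A E v d1)).
      rewrite !gm_scl_l, !gm_scl_r, gNN, gNFu, gNFv by auto.
      rewrite gL, gM, gN by auto.
      split; [|split; [|split]].
      * rewrite <- Hs. field. lra.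
      * ring.
      * ring.
      * rewrite <- Hs. field. split; lra.
Qed.

Definition den X Y := (1 - X)^2 + Y^2.
Definition Sinv X Y := 2*(1 - X) / den X Y.
Definition Tinv X Y := 2*Y / den X Y.

Lemma den_Pp E t : 0 < E -> den (Xf E t) (Yf E t) = 4 / rr E t.
Proof. intros. pose proof (rr_pos E t H). unfold den, Xf, Yf. unfold rr in *. field. lra. Qed.
Lemma Sinv_Pp E t : 0 < E -> Sinv (Xf E t) (Yf E t) = E + 1.
Proof. intros. pose proof (rr_pos E t H). unfold Sinv. rewrite den_Pp by auto. unfold Xf. unfold rr in *. field. lra. Qed.
Lemma Tinv_Pp E t : 0 < E -> Tinv (Xf E t) (Yf E t) = t.
Proof. intros. pose proof (rr_pos E t H). unfold Tinv. rewrite den_Pp by auto. unfold Yf. unfold rr in *. field. lra. Qed.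

Lemma lim_eq (u : nat -> R) (l l' : R) : is_lim_seq u l -> l = l' -> is_lim_seq u l'.
Proof. intros H ->; exact H. Qed.
Lemma lim_inv (u : nat -> R) (l : R) : is_lim_seq u l -> l <> 0 -> is_lim_seq (fun n => / u n) (/ l).
Proof. intros. eapply is_lim_seq_ext. intro n. unfold Rdiv. rewrite Rmult_1_l. reflexivity.
 eapply lim_eq. apply is_lim_seq_div'. apply is_lim_seq_const. eauto. auto. field. auto. Qed.
Lemma lim_pow2 (u : nat -> R) (l : R) : is_lim_seq u l -> is_lim_seq (fun n => u n ^ 2) (l ^ 2).
Proof. intros. eapply is_lim_seq_ext. intro n. simpl. reflexivity.
 eapply lim_eq. apply is_lim_seq_mult'. eauto. apply is_lim_seq_mult'. eauto. apply is_lim_seq_const. simpl; ring. Qed.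

Lemma lim_opp (u : nat -> R) (l : R) : is_lim_seq u l -> is_lim_seq (fun n => - u n) (- l).
Proof. intros H. apply (is_lim_seq_opp u l) in H. exact H. Qed.

Ltac lim1 := match goal with
  | |- is_lim_seq (fun n => - _) _ => apply lim_opp
  | |- is_lim_seq (fun n => _ - _) _ => apply is_lim_seq_minus'
  | |- is_lim_seq (fun n => _ + _) _ => apply is_lim_seq_plus'
  | |- is_lim_seq (fun n => _ * _) _ => apply is_lim_seq_mult'
  | |- is_lim_seq (fun n => _ ^ 2) _ => apply lim_pow2
  | |- is_lim_seq (fun n => / _) _ => apply lim_inv
  | |- is_lim_seq (fun n => ?c) _ => apply is_lim_seq_const
  | |- is_lim_seq _ _ => eassumption
  end.
Ltac lims := repeat lim1.

Lemma lim_den (x y : nat -> R) (X Y : R) : is_lim_seq x X -> is_lim_seq y Y -> is_lim_seq (fun n => den (x n) (y n)) (den X Y).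
Proof. intros. unfold den. lims. Qed.
Lemma lim_Sinv (x y : nat -> R) (X Y : R) : is_lim_seq x X -> is_lim_seq y Y -> den X Y <> 0 ->
  is_lim_seq (fun n => Sinv (x n) (y n)) (Sinv X Y).
Proof. intros. unfold Sinv, Rdiv. apply is_lim_seq_mult'. lims. apply lim_inv. apply lim_den; auto. auto. Qed.
Lemma lim_Tinv (x y : nat -> R) (X Y : R) : is_lim_seq x X -> is_lim_seq y Y -> den X Y <> 0 ->
  is_lim_seq (fun n => Tinv (x n) (y n)) (Tinv X Y).
Proof. intros. unfold Tinv, Rdiv. apply is_lim_seq_mult'. lims. apply lim_inv. apply lim_den; auto. auto. Qed.
Lemma lim_Xf (e t : nat -> R) (E T : R) : is_lim_seq e E -> is_lim_seq t T -> 0 < E ->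
  is_lim_seq (fun n => Xf (e n) (t n)) (Xf E T).
Proof. intros. unfold Xf, Rdiv. unfold rr. lims. pose proof (rr_pos E T H1). unfold rr in *; lra. Qed.
Lemma lim_Yf (e t : nat -> R) (E T : R) : is_lim_seq e E -> is_lim_seq t T -> 0 < E ->
  is_lim_seq (fun n => Yf (e n) (t n)) (Yf E T).
Proof. intros. unfold Yf, Rdiv. unfold rr. lims. pose proof (rr_pos E T H1). unfold rr in *; lra. Qed.

Fixpoint mkphi (g : nat -> nat -> nat) (n : nat) : nat :=
  match n with O => g O O | S m => g (S m) (S (mkphi g m)) end.

Lemma cv_small (v : nat -> R) (l : R) : (forall n, Rabs (v n - l) < / INR (S n)) -> is_lim_seq v l.
Proof.
  intros H. apply is_lim_seq_Reals. intros eps Heps.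
  destruct (archimed_cor1 eps Heps) as [N [HN HN0]].
  exists N. intros n Hn. unfold R_dist. eapply Rlt_le_trans. apply H.
  apply Rle_trans with (/ INR N); [|lra].
  apply Rinv_le_contravar. apply lt_0_INR; lia. apply le_INR; lia.
Qed.

Lemma BW1 (u : nat -> R) (M : R) : (forall n, Rabs (u n) <= M) ->
  exists phi (l : R), subseq_index phi /\ is_lim_seq (fun n => u (phi n)) l.
Proof.
  intros Hb.
  destruct (Bolzano_Weierstrass u (fun c => -M <= c <= M) (compact_P3 _ _)) as [l Hl].
  { intro n. specialize (Hb n). apply Rabs_le_between in Hb. lra. }
  assert (G : forall k N, exists p, (N <= p)%nat /\ Rabs (u p - l) < / INR (S k)).
  { intros k N. assert (Hp : 0 < / INR (S k)) by (apply Rinv_0_lt_compat, lt_0_INR; lia).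
    destruct (Hl (disc l (mkposreal _ Hp)) N) as [p [Hp1 Hp2]].
    - exists (mkposreal _ Hp). intros z Hz; exact Hz.
    - exists p; split; auto. }
  set (g := fun k N => proj1_sig (constructive_indefinite_description _ (G k N))).
  assert (Hg : forall k N, (N <= g k N)%nat /\ Rabs (u (g k N) - l) < / INR (S k)).
  { intros k N. unfold g. destruct (constructive_indefinite_description _ (G k N)); auto. }
  exists (mkphi g), l. split.
  - intro n. simpl. destruct (Hg (S n) (S (mkphi g n))). lia.
  - apply cv_small. intro n. destruct n; simpl; apply Hg.
Qed.

Lemma subseq_comp phi psi : subseq_index phi -> subseq_index psi -> subseq_index (fun n => phi (psi n)).
Proof.
  intros Hp Hq n.
  assert (Hm : forall a b, (a < b)%nat -> (phi a < phi b)%nat).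
  { intros a b Hab. induction Hab. apply Hp. specialize (Hp m). lia. }
  apply Hm, Hq.
Qed.

Lemma lim_sub (u : nat -> R) (l : R) phi : subseq_index phi -> is_lim_seq u l -> is_lim_seq (fun n => u (phi n)) l.
Proof. intros Hp H. apply (is_lim_seq_subseq u l phi); auto. apply eventually_subseq. exact Hp. Qed.

Lemma BW2 (s : nat -> R * R) M : (forall n, Rabs (fst (s n)) <= M /\ Rabs (snd (s n)) <= M) ->
  exists phi (l1 l2 : R), subseq_index phi /\ is_lim_seq (fun n => fst (s (phi n))) l1 /\
    is_lim_seq (fun n => snd (s (phi n))) l2.
Proof.
  intros Hb.
  destruct (BW1 (fun n => fst (s n)) M) as [phi [l1 [Hp H1]]]. { intro n; apply Hb. }
  destruct (BW1 (fun n => snd (s (phi n))) M) as [psi [l2 [Hq H2]]]. { intro n; apply Hb. }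
  exists (fun n => phi (psi n)), l1, l2. split; [apply subseq_comp; auto|]. split; auto.
  apply (lim_sub (fun n => fst (s (phi n))) l1 psi); auto.
Qed.

Lemma cv_bounded (u : nat -> R) (l : R) : is_lim_seq u l -> exists M, forall n, u n <= M.
Proof.
  intros H. apply is_lim_seq_Reals in H. destruct (H 1 Rlt_0_1) as [N HN].
  assert (forall K, exists M, forall n, (n <= K)%nat -> u n <= M).
  { induction K as [|K [M HM]].
    - exists (u O). intros n Hn. replace n with O by lia. lra.
    - exists (Rmax M (u (S K))). intros n Hn. destruct (Nat.eq_dec n (S K)) as [->|].
      + apply Rmax_r.
      + apply Rle_trans with M. apply HM; lia. apply Rmax_l. }
  destruct (H0 N) as [M HM]. exists (Rmax M (l + 1)). intro n.
  destruct (Compare_dec.le_lt_dec n N). apply Rle_trans with M; [auto|apply Rmax_l].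
  specialize (HN n ltac:(lia)). unfold R_dist in HN. apply Rabs_lt_between in HN.
  apply Rle_trans with (l+1); [lra|apply Rmax_r].
Qed.

Lemma I_nonempty y1 y2 : ext_lt y1 y2 -> exists y0, in_I y1 y2 y0.
Proof.
  unfold ext_lt, in_I. destruct y1 as [a|]; destruct y2 as [b|]; intros H.
  - exists ((a+b)/2); split; lra.
  - exists (a+1); split; auto; lra.
  - exists (b-1); split; auto; lra.
  - exists 0; split; auto.
Qed.

Lemma I_between y1 y2 a b y : in_I y1 y2 a -> in_I y1 y2 b -> a <= y <= b -> in_I y1 y2 y.
Proof.
  unfold in_I. destruct y1 as [c|]; destruct y2 as [d|]; intros [H1 H2] [H3 H4] H; split; auto; lra.
Qed.

Lemma rho_interval y1 y2 (rho : R -> R) (Hy : ext_lt y1 y2)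
  (Hlim1 : tends_infty_left y1 y2 rho) (Hlim2 : tends_infty_right y1 y2 rho) (M : R) (y0 : R) :
  in_I y1 y2 y0 ->
  exists a b, in_I y1 y2 a /\ in_I y1 y2 b /\ a <= y0 <= b /\
    forall y, in_I y1 y2 y -> rho y <= M -> a <= y <= b.
Proof.
  intros H0. specialize (Hlim1 M). specialize (Hlim2 M).
  assert (HL : exists a, in_I y1 y2 a /\ a <= y0 /\ forall y, in_I y1 y2 y -> rho y <= M -> a <= y).
  { destruct y1 as [c|].
    - destruct Hlim1 as [d [Hd Hd']]. exists (Rmin (c + d) y0). split; [|split].
      + destruct H0 as [H0a H0b]. split.
        * apply Rmin_glb_lt; lra.
        * destruct y2; auto. apply Rle_lt_trans with y0; auto. apply Rmin_r.
      + apply Rmin_r.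
      + intros y Hy' Hr. destruct (Rlt_le_dec y (c+d)). specialize (Hd' y Hy' r). lra.
        apply Rle_trans with (c+d); auto. apply Rmin_l.
    - destruct Hlim1 as [N HN]. exists (Rmin N y0). split; [|split].
      + destruct H0 as [H0a H0b]. split; auto.
        destruct y2; auto. apply Rle_lt_trans with y0; auto. apply Rmin_r.
      + apply Rmin_r.
      + intros y Hy' Hr. destruct (Rlt_le_dec y N). specialize (HN y Hy' r). lra.
        apply Rle_trans with N; auto. apply Rmin_l. }
  assert (HR : exists b, in_I y1 y2 b /\ y0 <= b /\ forall y, in_I y1 y2 y -> rho y <= M -> y <= b).
  { destruct y2 as [c|].
    - destruct Hlim2 as [d [Hd Hd']]. exists (Rmax (c - d) y0). split; [|split].
      + destruct H0 as [H0a H0b]. split.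
        * destruct y1; auto. apply Rlt_le_trans with y0; auto. apply Rmax_r.
        * apply Rmax_lub_lt; lra.
      + apply Rmax_r.
      + intros y Hy' Hr. destruct (Rlt_le_dec (c-d) y). specialize (Hd' y Hy' r). lra.
        apply Rle_trans with (c-d); auto. apply Rmax_l.
    - destruct Hlim2 as [N HN]. exists (Rmax N y0). split; [|split].
      + destruct H0 as [H0a H0b]. split; auto.
        destruct y1; auto. apply Rlt_le_trans with y0; auto. apply Rmax_r.
      + apply Rmax_r.
      + intros y Hy' Hr. destruct (Rlt_le_dec N y). specialize (HN y Hy' r). lra.
        apply Rle_trans with N; auto. apply Rmax_l. }
  destruct HL as [a [Ha1 [Ha2 Ha3]]]. destruct HR as [b [Hb1 [Hb2 Hb3]]].
  exists a, b. refine (conj Ha1 (conj Hb1 (conj (conj Ha2 Hb2) _))). intros y Hy1 Hy2; split; auto.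
Qed.

Lemma D0_cont y1 y2 (D : nat -> R -> R)
  (HD : forall (n : nat) (y : R), in_I y1 y2 y -> derivable_pt_lim (D n) y (D (S n) y)) y :
  in_I y1 y2 y -> continuity_pt (D 0%nat) y.
Proof. intros. apply derivable_continuous_pt. exists (D 1%nat y). apply HD; auto. Qed.

Lemma rho_lower y1 y2 (rho : R -> R) (D : nat -> R -> R) (Hy : ext_lt y1 y2)
  (HD0 : forall y, in_I y1 y2 y -> D 0%nat y = rho y)
  (HD : forall (n : nat) (y : R), in_I y1 y2 y -> derivable_pt_lim (D n) y (D (S n) y))
  (Hlim1 : tends_infty_left y1 y2 rho) (Hlim2 : tends_infty_right y1 y2 rho) :
  exists c, forall y, in_I y1 y2 y -> c <= rho y.
Proof.
  destruct (I_nonempty _ _ Hy) as [y0 H0].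
  destruct (rho_interval y1 y2 rho Hy Hlim1 Hlim2 (rho y0) y0 H0) as [a [b [Ha [Hb [Hab Hr]]]]].
  destruct (continuity_ab_min (D 0%nat) a b) as [mx [Hmx1 Hmx2]]. lra.
  { intros c Hc. apply (D0_cont y1 y2 D HD). apply (I_between y1 y2 a b); auto. }
  exists (Rmin (D 0%nat mx) (rho y0)). intros y Hy'.
  destruct (Rle_lt_dec (rho y) (rho y0)).
  - specialize (Hr y Hy' r). apply Rle_trans with (D 0%nat mx). apply Rmin_l. rewrite <- (HD0 y) by auto. auto.
  - apply Rle_trans with (rho y0). apply Rmin_r. lra.
Qed.

Lemma f_cont y1 y2 (rho : R -> R) (D : nat -> R -> R)
  (HD0 : forall y, in_I y1 y2 y -> D 0%nat y = rho y)
  (HD : forall (n : nat) (y : R), in_I y1 y2 y -> derivable_pt_lim (D n) y (D (S n) y))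
  (yn tn : nat -> R) (y t : R) :
  (forall n, in_I y1 y2 (yn n)) -> in_I y1 y2 y -> is_lim_seq yn y -> is_lim_seq tn t ->
  is_lim_seq (fun n => Defs.c1 (f_rho rho (yn n) (tn n))) (Defs.c1 (f_rho rho y t)) /\
  is_lim_seq (fun n => Defs.c2 (f_rho rho (yn n) (tn n))) (Defs.c2 (f_rho rho y t)) /\
  is_lim_seq (fun n => Defs.c3 (f_rho rho (yn n) (tn n))) (Defs.c3 (f_rho rho y t)).
Proof.
  intros Hn Hy Hyl Htl.
  assert (HE : is_lim_seq (fun n => Ee D (yn n)) (Ee D y)).
  { apply (is_lim_seq_continuous (Ee D)); auto. apply derivable_continuous_pt.
    exists (Ee D y * D 1%nat y). apply dEe. auto. }
  assert (Hr : forall z, in_I y1 y2 z -> exp (rho z) = Ee D z).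
  { intros; unfold Ee; rewrite HD0; auto. }
  assert (Hp : 0 < Ee D y) by apply Ee_pos.
  split; [|split].
  - apply (is_lim_seq_ext (fun n => Xf (Ee D (yn n)) (tn n))).
    { intro n. rewrite f_rho_eq, (Hr (yn n) (Hn n)). reflexivity. }
    rewrite f_rho_eq, (Hr y Hy). apply lim_Xf; auto.
  - apply (is_lim_seq_ext (fun n => Yf (Ee D (yn n)) (tn n))).
    { intro n. rewrite f_rho_eq, (Hr (yn n) (Hn n)). reflexivity. }
    rewrite f_rho_eq, (Hr y Hy). apply lim_Yf; auto.
  - apply (is_lim_seq_ext yn).
    { intro n. rewrite f_rho_eq. reflexivity. }
    rewrite f_rho_eq. exact Hyl.
Qed.

Lemma lim_unique (u : nat -> R) (l1 l2 : R) : is_lim_seq u l1 -> is_lim_seq u l2 -> l1 = l2.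
Proof. intros H1 H2. apply is_lim_seq_unique in H1. apply is_lim_seq_unique in H2.
  rewrite H1 in H2. injection H2; auto. Qed.

Lemma P3_ext (q q' : P3) : Defs.c1 q = Defs.c1 q' -> Defs.c2 q = Defs.c2 q' -> Defs.c3 q = Defs.c3 q' -> q = q'.
Proof. destruct q as [[a b] c]; destruct q' as [[a' b'] c']; unc. intros -> -> ->; reflexivity. Qed.

Lemma H2R_f rho y t : H2R (f_rho rho y t).
Proof. rewrite f_rho_eq. unfold H2R, Pp; unc. pose proof (exp_pos (rho y)).
  pose proof (one_minus (exp (rho y)) t H). pose proof (rr_pos (exp (rho y)) t H).
  assert (0 < 4 * exp (rho y) / rr (exp (rho y)) t) by (apply Rdiv_lt_0_compat; lra). lra. Qed.

Lemma Tinv_f rho y t : Tinv (Defs.c1 (f_rho rho y t)) (Defs.c2 (f_rho rho y t)) = t.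
Proof. rewrite f_rho_eq. unfold Pp; unc. apply Tinv_Pp, exp_pos. Qed.
Lemma Sinv_f rho y t : Sinv (Defs.c1 (f_rho rho y t)) (Defs.c2 (f_rho rho y t)) = exp (rho y) + 1.
Proof. rewrite f_rho_eq. unfold Pp; unc. apply Sinv_Pp, exp_pos. Qed.
Lemma c3_f rho y t : Defs.c3 (f_rho rho y t) = y.
Proof. rewrite f_rho_eq. reflexivity. Qed.

Lemma den_pos_H2R X Y : X^2 + Y^2 < 1 -> 0 < den X Y.
Proof. intros. unfold den. assert (X < 1) by nra. nra. Qed.

Lemma first_derivs y1 y2 (rho : R -> R) (D : nat -> R -> R)
  (HD0 : forall y, in_I y1 y2 y -> D 0%nat y = rho y)
  (HD : forall (n : nat) (y : R), in_I y1 y2 y ->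
          derivable_pt_lim (D n) y (D (S n) y)) u v : in_I y1 y2 u ->
  vderiv3 (fun s => f_rho rho s v) u (FuA (Ee D u) v (D 1%nat u)) /\
  vderiv3 (fun s => f_rho rho u s) v (FvA (Ee D u) v).
Proof.
  intros Hu.
  pose proof (Ee_pos D u) as HE.
  assert (Hrho : exp (rho u) = Ee D u) by (unfold Ee; rewrite HD0; auto).
  assert (H0 := HD 0%nat u Hu).
  split.
  - unfold vderiv3; split; [|split].
    + apply (derivable_pt_lim_ext (fun s => Xf (exp (rho s)) v)).
      { intros; rewrite f_rho_eq; reflexivity. }
      apply (ext_rho y1 y2 rho D HD0 u Hu (fun e => Xf e v)).
      eapply dpl_eq. apply (dcomp (fun e => Xf e v) (Ee D)). apply dEe; auto. apply dXE; auto.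
      unfold FuA; unc; ring.
    + apply (derivable_pt_lim_ext (fun s => Yf (exp (rho s)) v)).
      { intros; rewrite f_rho_eq; reflexivity. }
      apply (ext_rho y1 y2 rho D HD0 u Hu (fun e => Yf e v)).
      eapply dpl_eq. apply (dcomp (fun e => Yf e v) (Ee D)). apply dEe; auto. apply dYE; auto.
      unfold FuA; unc; ring.
    + apply (derivable_pt_lim_ext (fun s => s)).
      { intros; rewrite f_rho_eq; reflexivity. }
      apply derivable_pt_lim_id.
  - unfold vderiv3; split; [|split].
    + apply (derivable_pt_lim_ext (fun s => Xf (Ee D u) s)).
      { intros; rewrite f_rho_eq, Hrho; reflexivity. }
      apply dXt; auto.
    + apply (derivable_pt_lim_ext (fun s => Yf (Ee D u) s)).
      { intros; rewrite f_rho_eq, Hrho; reflexivity. }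
      apply dYt; auto.
    + apply (derivable_pt_lim_ext (fun s => u)).
      { intros; rewrite f_rho_eq; reflexivity. }
      apply derivable_pt_lim_const.
Qed.

Lemma lin_FuFv E t d1 : 0 < E -> linindep (FuA E t d1) (FvA E t).
Proof.
  intros HE [h1 [h2 h3]]. unfold FuA, FvA in *; unc.
  assert (Hyt : Yt E t = 0) by lra. assert (Hxt : Xt E t = 0) by lra.
  pose proof (rr_pos E t HE). pose proof (rr2 E t).
  unfold Xt, Yt in *.
  assert (AA E t = 0). { apply Rmult_eq_reg_r with (2 / rr E t ^2). rewrite Rmult_0_l.
    rewrite <- Hyt. field. lra. apply Rgt_not_eq. apply Rdiv_lt_0_compat; [lra|]. apply pow_lt; lra. }
  assert (BB E t = 0). { apply Rmult_eq_reg_r with (2 / rr E t ^2). rewrite Rmult_0_l.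
    rewrite <- Hxt. field. lra. apply Rgt_not_eq. apply Rdiv_lt_0_compat; [lra|]. apply pow_lt; lra. }
  rewrite H1, H2 in H0. assert (0 < rr E t ^2) by (apply pow_lt; lra). lra.
Qed.

Lemma cv3_lims (q : nat -> P3) (l : P3) : cv3 q l ->
  is_lim_seq (fun n => Defs.c1 (q n)) (Defs.c1 l) /\ is_lim_seq (fun n => Defs.c2 (q n)) (Defs.c2 l) /\
  is_lim_seq (fun n => Defs.c3 (q n)) (Defs.c3 l).
Proof. intros [H1 [H2 H3]]. rewrite <- !is_lim_seq_Reals in *. auto. Qed.

Lemma prop_emb y1 y2 (rho : R -> R) (D : nat -> R -> R) (Hy : ext_lt y1 y2)
  (HD0 : forall y, in_I y1 y2 y -> D 0%nat y = rho y)
  (HD : forall (n : nat) (y : R), in_I y1 y2 y -> derivable_pt_lim (D n) y (D (S n) y))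
  (Hlim1 : tends_infty_left y1 y2 rho) (Hlim2 : tends_infty_right y1 y2 rho) :
  properly_embedded (fun y t : R => in_I y1 y2 y) (f_rho rho).
Proof.
  split; [|split; [|split; [|split]]].
  - intros; apply H2R_f.
  - intros u v u' v' _ _ H.
    assert (Hu : u = u') by (rewrite <- (c3_f rho u v), <- (c3_f rho u' v'), H; auto).
    split; auto. rewrite <- (Tinv_f rho u v), <- (Tinv_f rho u' v'), H; auto.
  - exists (fun u v => FuA (Ee D u) v (D 1%nat u)), (fun u v => FvA (Ee D u) v).
    intros u v Hu. destruct (first_derivs y1 y2 rho D HD0 HD u v Hu).
    split; auto. split; auto. apply lin_FuFv, Ee_pos.
  - intros s p _ _ Hcv. apply cv3_lims in Hcv. destruct Hcv as [H1 [H2 H3]].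
    split; apply is_lim_seq_Reals.
    + apply (is_lim_seq_ext (fun n => Defs.c3 (f_rho rho (fst (s n)) (snd (s n))))).
      { intro n; apply c3_f. }
      rewrite c3_f in H3. exact H3.
    + apply (is_lim_seq_ext (fun n => Tinv (Defs.c1 (f_rho rho (fst (s n)) (snd (s n))))
                                          (Defs.c2 (f_rho rho (fst (s n)) (snd (s n)))))).
      { intro n; apply Tinv_f. }
      rewrite <- (Tinv_f rho (fst p) (snd p)). apply lim_Tinv; auto.
      apply Rgt_not_eq, den_pos_H2R, H2R_f.
  - intros A HA HC s Hs.
    destruct (HC (fun n => f_rho rho (fst (s n)) (snd (s n)))) as [phi [a [Hphi [Ha Hcv]]]].
    { intro n; apply Hs. }
    apply cv3_lims in Hcv. destruct Hcv as [H1 [H2 H3]].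
    set (yn := fun n => fst (s (phi n))). set (tn := fun n => snd (s (phi n))).
    assert (HI : forall n, in_I y1 y2 (yn n)) by (intro n; apply Hs).
    assert (Hden : den (Defs.c1 a) (Defs.c2 a) <> 0) by (apply Rgt_not_eq, den_pos_H2R, HA, Ha).
    assert (Ht : is_lim_seq tn (Tinv (Defs.c1 a) (Defs.c2 a))).
    { apply (is_lim_seq_ext (fun n => Tinv (Defs.c1 (f_rho rho (yn n) (tn n)))
                                          (Defs.c2 (f_rho rho (yn n) (tn n))))).
      { intro n; apply Tinv_f. } apply lim_Tinv; auto. }
    assert (HS : is_lim_seq (fun n => exp (rho (yn n)) + 1) (Sinv (Defs.c1 a) (Defs.c2 a))).
    { apply (is_lim_seq_ext (fun n => Sinv (Defs.c1 (f_rho rho (yn n) (tn n)))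
                                          (Defs.c2 (f_rho rho (yn n) (tn n))))).
      { intro n; apply Sinv_f. } apply lim_Sinv; auto. }
    assert (Hyl : is_lim_seq yn (Defs.c3 a)).
    { apply (is_lim_seq_ext (fun n => Defs.c3 (f_rho rho (yn n) (tn n)))).
      { intro n; apply c3_f. } exact H3. }
    destruct (cv_bounded _ _ HS) as [M HM].
    assert (HM' : forall n, rho (yn n) <= ln M).
    { intro n. specialize (HM n). pose proof (exp_pos (rho (yn n))).
      rewrite <- (ln_exp (rho (yn n))). left. apply ln_increasing; lra. }
    destruct (rho_interval y1 y2 rho Hy Hlim1 Hlim2 (ln M) (yn 0%nat) (HI 0%nat))
      as [a' [b' [Ha' [Hb' [_ Hab]]]]].
    assert (Hlim : a' <= Defs.c3 a <= b').
    { apply is_lim_seq_Reals in Hyl. split.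
      - apply (Rle_cv_lim (Un := fun _ => a') (Vn := yn)); auto. intro n; apply (Hab _ (HI n) (HM' n)).
        intros eps He; exists O; intros; unfold R_dist; rewrite Rminus_diag, Rabs_R0; auto.
      - apply (Rle_cv_lim (Un := yn) (Vn := fun _ => b')); auto. intro n; apply (Hab _ (HI n) (HM' n)).
        intros eps He; exists O; intros; unfold R_dist; rewrite Rminus_diag, Rabs_R0; auto. }
    assert (HyI : in_I y1 y2 (Defs.c3 a)) by (apply (I_between y1 y2 a' b'); auto).
    exists phi, (Defs.c3 a, Tinv (Defs.c1 a) (Defs.c2 a)). split; auto. split.
    + simpl. split; auto.
      destruct (f_cont y1 y2 rho D HD0 HD yn tn (Defs.c3 a) (Tinv (Defs.c1 a) (Defs.c2 a)) HI HyI Hyl Ht)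
        as [G1 [G2 G3]].
      replace (f_rho rho (Defs.c3 a) (Tinv (Defs.c1 a) (Defs.c2 a))) with a; auto.
      apply P3_ext; eapply lim_unique; eauto.
    + split; apply is_lim_seq_Reals; simpl; auto.
Qed.

Lemma cv_smallC (v : nat -> R) (l C : R) : 0 < C -> (forall n, Rabs (v n - l) <= C / INR (S n)) -> is_lim_seq v l.
Proof.
  intros HC H. apply is_lim_seq_Reals. intros eps Heps.
  assert (He : 0 < eps / C) by (apply Rdiv_lt_0_compat; auto).
  destruct (archimed_cor1 _ He) as [N [HN HN0]].
  exists N. intros n Hn. unfold R_dist. eapply Rle_lt_trans. apply H.
  assert (/ INR (S n) <= / INR N).
  { apply Rinv_le_contravar. apply lt_0_INR; lia. apply le_INR; lia. }
  unfold Rdiv. apply Rle_lt_trans with (C * / INR N). apply Rmult_le_compat_l; lra.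
  apply Rmult_lt_reg_r with (/ C). apply Rinv_0_lt_compat; auto.
  replace (C * / INR N * / C) with (/ INR N) by (field; repeat split; try lra; apply not_0_INR; lia).
  exact HN.
Qed.

Lemma frac_le a b C c : 0 < b -> 0 < c -> a * c <= C * b -> a / b <= C / c.
Proof. intros Hb Hc H. unfold Rdiv. apply Rmult_le_reg_r with (b * c). nra.
  replace (a * / b * (b * c)) with (a * c) by (field; lra).
  replace (C * / c * (b * c)) with (C * b) by (field; lra). exact H. Qed.

Lemma lim_horo E : 0 < E ->
  is_lim_seq (fun n => Xf E (INR n)) 1 /\ is_lim_seq (fun n => Yf E (INR n)) 0.
Proof.
  intros HE. split; apply (cv_smallC _ _ (4 * (E+1))); try lra; intro n;
  pose proof (pos_INR n); rewrite S_INR; pose proof (rr_pos E (INR n) HE).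
  - unfold Xf. replace (1 - 2 * (E + 1) / rr E (INR n) - 1) with (- (2 * (E+1) / rr E (INR n))) by ring.
    rewrite Rabs_Ropp, Rabs_right. apply frac_le; try lra. unfold rr.
    assert (INR n + 1 <= 2*((E+1)^2 + INR n^2)) by nra.
    assert (0 < E + 1) by lra. nra.
    apply Rle_ge, Rlt_le, Rdiv_lt_0_compat; lra.
  - unfold Yf. rewrite Rminus_0_r, Rabs_right. apply frac_le; try lra. unfold rr.
    assert (2*INR n*(INR n+1) <= 4*(1 + INR n^2)) by nra.
    assert (1 <= E + 1) by lra. assert (1 <= (E+1)^2) by nra.
    assert (1 + INR n ^2 <= (E+1)*((E+1)^2 + INR n^2)) by nra. nra.
    apply Rle_ge, Rmult_le_pos. lra. left; apply Rinv_0_lt_compat; lra.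
Qed.

Lemma on_circle_Sinv x y : x^2 + y^2 = 1 -> x <> 1 -> den x y <> 0 /\ Sinv x y = 1.
Proof. intros H Hx. assert (Hd : den x y = 2 - 2*x) by (unfold den; nra).
  assert (2 - 2*x <> 0) by lra. split. rewrite Hd; auto. unfold Sinv. rewrite Hd. field. auto. Qed.

Lemma Phi_nz a1 a2 b1 b2 : a1^2 + a2^2 = 1 -> b1^2 + b2^2 = 1 ->
  (a1, a2) <> (1, 0) -> (b1, b2) <> (1, 0) -> (a1, a2) <> (b1, b2) ->
  a1 * b2 - a2 * b1 + a2 - b2 <> 0.
Proof.
  intros Ha Hb Ha0 Hb0 Hab Hdet.
  set (u1 := a1 - 1). set (u2 := a2). set (v1 := b1 - 1). set (v2 := b2).
  assert (Hdet' : u1 * v2 - u2 * v1 = 0) by (unfold u1, u2, v1, v2; lra).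
  assert (Hu : 2 * u1 + (u1^2 + u2^2) = 0) by (unfold u1, u2; nra).
  assert (Hv : 2 * v1 + (v1^2 + v2^2) = 0) by (unfold v1, v2; nra).
  assert (Hun : u1^2 + u2^2 <> 0).
  { intro H0. assert (u1 = 0) by nra. assert (u2 = 0) by nra. apply Ha0. unfold u1, u2 in *. f_equal; lra. }
  set (mu := (u1 * v1 + u2 * v2) / (u1^2 + u2^2)).
  assert (Hv1 : v1 = mu * u1).
  { unfold mu. apply Rmult_eq_reg_r with (u1^2 + u2^2); auto.
    field_simplify; auto. assert (v1 * (u1^2+u2^2) - (u1*v1+u2*v2)*u1 = - u2 * (u1*v2 - u2*v1)) by ring.
    rewrite Hdet' in H. nra. }
  assert (Hv2 : v2 = mu * u2).
  { unfold mu. apply Rmult_eq_reg_r with (u1^2 + u2^2); auto.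
    field_simplify; auto. assert (v2 * (u1^2+u2^2) - (u1*v1+u2*v2)*u2 = u1 * (u1*v2 - u2*v1)) by ring.
    rewrite Hdet' in H. nra. }
  rewrite Hv1, Hv2 in Hv.
  assert (Hm : mu * (mu - 1) * (u1^2 + u2^2) = 0) by nra.
  assert (mu * (mu - 1) = 0).
  { apply Rmult_eq_reg_r with (u1^2 + u2^2); auto. lra. }
  destruct (Rmult_integral _ _ H) as [Hm0 | Hm1].
  - apply Hb0. rewrite Hm0 in Hv1, Hv2. unfold v1, v2 in *. f_equal; lra.
  - apply Hab. assert (mu = 1) by lra. rewrite H0 in Hv1, Hv2. unfold u1, u2, v1, v2 in *. f_equal; lra.
Qed.

Lemma geo_transform E t k b a : 0 < E ->
  (2*k + 2*b) * rr E t - (4*k*(E+1) - 4*k + 4*b*(E+1) + 4*t*a) =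
  rr E t * (k * (Xf E t ^2 + Yf E t ^2 + 1) - 2 * (- Xf E t * b + Yf E t * a)).
Proof. intros HE. pose proof (rr_pos E t HE). unfold Xf, Yf. unfold rr in *. field. lra. Qed.

Lemma sq_bound S T K : 0 <= K -> 0 <= T -> S^2 + T^2 <= K * (1 + S + T) -> S <= 2*K + 1 /\ T <= 2*K + 1.
Proof.
  intros HK HT H. split.
  - destruct (Rle_lt_dec S (2*K+1)); auto.
    assert (0 < (S - K/2 - K - 1) * (S - K/2 + K + 1)) by (apply Rmult_lt_0_compat; lra).
    nra.
  - destruct (Rle_lt_dec T (2*K+1)); auto.
    assert (0 < (T - K/2 - K - 1) * (T - K/2 + K + 1)) by (apply Rmult_lt_0_compat; lra).
    nra.
Qed.

Lemma pow2_abs t : t^2 = Rabs t ^2.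
Proof. destruct (Rcase_abs t); [rewrite Rabs_left|rewrite Rabs_right]; auto; ring. Qed.

Lemma quad_bound S t Phi k b a : Phi <> 0 -> 0 <= S ->
  Phi * (S^2 + t^2) = 4*k*S - 4*k + 4*b*S + 4*t*a ->
  S <= 2 * ((4*Rabs k + 4*Rabs b + 4*Rabs a) / Rabs Phi) + 1 /\
  Rabs t <= 2 * ((4*Rabs k + 4*Rabs b + 4*Rabs a) / Rabs Phi) + 1.
Proof.
  intros HP HS H.
  set (K := (4*Rabs k + 4*Rabs b + 4*Rabs a) / Rabs Phi).
  assert (HPp : 0 < Rabs Phi) by (apply Rabs_pos_lt; auto).
  pose proof (Rabs_pos k); pose proof (Rabs_pos b); pose proof (Rabs_pos a); pose proof (Rabs_pos t).
  assert (HK : 0 <= K) by (unfold K; apply Rdiv_le_0_compat; lra).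
  apply sq_bound; auto.
  assert (Habs : Rabs Phi * (S^2 + t^2) <= (4*Rabs k + 4*Rabs b + 4*Rabs a) * (1 + S + Rabs t)).
  { assert (E1 : Rabs Phi * (S^2 + t^2) = Rabs (Phi * (S^2 + t^2))).
    { rewrite Rabs_mult. f_equal. rewrite Rabs_right; auto. nra. }
    rewrite E1, H.
    replace (4*k*S - 4*k + 4*b*S + 4*t*a) with ((((4*k)*S + - (4*k)) + (4*b)*S) + (4*t)*a) by ring.
    eapply Rle_trans. apply Rabs_triang.
    eapply Rle_trans. apply Rplus_le_compat_r. apply Rabs_triang.
    eapply Rle_trans. apply Rplus_le_compat_r. apply Rplus_le_compat_r. apply Rabs_triang.
    rewrite Rabs_Ropp, !Rabs_mult. rewrite (Rabs_right 4) by lra. rewrite (Rabs_right S) by lra.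
    nra. }
  rewrite (pow2_abs t) in Habs.
  unfold K. apply Rmult_le_reg_l with (Rabs Phi); auto.
  replace (Rabs Phi * ((4 * Rabs k + 4 * Rabs b + 4 * Rabs a) / Rabs Phi * (1 + S + Rabs t)))
    with ((4*Rabs k + 4*Rabs b + 4*Rabs a) * (1 + S + Rabs t)) by (field; lra). lra.
Qed.

Lemma exp_le x y : x <= y -> exp x <= exp y.
Proof. intros [H|H]. left; apply exp_increasing; auto. subst; lra. Qed.

Lemma simple_end_part y1 y2 (rho : R -> R) (D : nat -> R -> R) (Hy : ext_lt y1 y2)
  (HD0 : forall y, in_I y1 y2 y -> D 0%nat y = rho y)
  (HD : forall (n : nat) (y : R), in_I y1 y2 y -> derivable_pt_lim (D n) y (D (S n) y))
  (Hlim1 : tends_infty_left y1 y2 rho) (Hlim2 : tends_infty_right y1 y2 rho) :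
  simple_end (fun y t : R => in_I y1 y2 y) (f_rho rho).
Proof.
  destruct (rho_lower y1 y2 rho D Hy HD0 HD Hlim1 Hlim2) as [c Hc].
  destruct (I_nonempty _ _ Hy) as [y0 H0].
  exists (1, 0). split.
  - intro th. split.
    + intros [Hcirc [sq [Hsq Hcv]]].
      destruct th as [x y]. unfold on_circle in Hcirc; simpl in Hcirc.
      destruct (Req_dec x 1) as [Hx|Hx].
      * subst. assert (y = 0) by nra. subst; auto.
      * exfalso. destruct (on_circle_Sinv x y Hcirc Hx) as [Hd HS].
        destruct Hcv as [Hc1 Hc2]; simpl in Hc1, Hc2. rewrite <- is_lim_seq_Reals in Hc1, Hc2.
        pose proof (lim_Sinv _ _ _ _ Hc1 Hc2 Hd) as HL. rewrite HS in HL.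
        assert (Hle : forall n, exp c + 1 <= Sinv (fst (sq n)) (snd (sq n))).
        { intro n. destruct (Hsq n) as [q [[u [v [Hu Hq]]] Hp]]. rewrite <- Hp. simpl. subst q.
          rewrite Sinv_f. pose proof (Hc u Hu). apply Rplus_le_compat_r. apply exp_le; auto. }
        pose proof (is_lim_seq_le (fun _ => exp c + 1) _ (exp c + 1) 1 Hle (is_lim_seq_const _) HL) as HH.
        simpl in HH. pose proof (exp_pos c). lra.
    + intro Hth; subst. split. unfold on_circle; simpl; ring.
      exists (fun n => (Defs.c1 (f_rho rho y0 (INR n)), Defs.c2 (f_rho rho y0 (INR n)))). split.
      * intro n. exists (f_rho rho y0 (INR n)). split; auto. exists y0, (INR n); auto.
      * destruct (lim_horo (exp (rho y0)) (exp_pos _)) as [L1 L2].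
        split; simpl; rewrite <- is_lim_seq_Reals.
        -- apply (is_lim_seq_ext (fun n => Xf (exp (rho y0)) (INR n))); auto.
           intro n; rewrite f_rho_eq; reflexivity.
        -- apply (is_lim_seq_ext (fun n => Yf (exp (rho y0)) (INR n))); auto.
           intro n; rewrite f_rho_eq; reflexivity.
  - intros th1 th2 Hc1 Hc2 Hn1 Hn2 Hn12. right.
    destruct th1 as [a1 a2]; destruct th2 as [b1 b2]. unfold on_circle in *; simpl in *.
    set (k := a1*b2 - a2*b1). set (bb := a2 - b2). set (aa := a1 - b1).
    set (Phi := 2*k + 2*bb).
    assert (HPhi : Phi <> 0).
    { unfold Phi, k, bb. pose proof (Phi_nz a1 a2 b1 b2 Hc1 Hc2 Hn1 Hn2 Hn12). lra. }
    intros q Hq.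
    assert (Hch : forall n, {p : R * R | in_I y1 y2 (fst p) /\ f_rho rho (fst p) (snd p) = q n}).
    { intro n. apply constructive_indefinite_description. destruct (Hq n) as [[u [v [Hu Hf]]] _].
      exists (u, v); auto. }
    set (yn := fun n => fst (proj1_sig (Hch n))). set (tn := fun n => snd (proj1_sig (Hch n))).
    assert (HyI : forall n, in_I y1 y2 (yn n)) by (intro n; unfold yn; destruct (Hch n) as [p [Hp1 Hp2]]; auto).
    assert (Hfq : forall n, f_rho rho (yn n) (tn n) = q n) by (intro n; unfold yn, tn; destruct (Hch n) as [p [Hp1 Hp2]]; auto).
    assert (Hgeo : forall n, k * (Defs.c1 (q n) ^2 + Defs.c2 (q n) ^2 + 1) =
                             2 * (- Defs.c1 (q n) * bb + Defs.c2 (q n) * aa)).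
    { intro n. destruct (Hq n) as [_ [_ Heq]]. simpl in Heq. unfold k, bb, aa. lra. }
    set (B := 2 * ((4*Rabs k + 4*Rabs bb + 4*Rabs aa) / Rabs Phi) + 1).
    assert (Hbd : forall n, exp (rho (yn n)) + 1 <= B /\ Rabs (tn n) <= B).
    { intro n. pose proof (exp_pos (rho (yn n))) as HE.
      apply (quad_bound _ _ Phi k bb aa HPhi). lra.
      pose proof (geo_transform (exp (rho (yn n))) (tn n) k bb aa HE) as G.
      pose proof (Hgeo n) as Hg. rewrite <- Hfq, f_rho_eq in Hg. unfold Pp in Hg; unc.
      rewrite Hg in G. replace (2 * (- Xf (exp (rho (yn n))) (tn n) * bb + Yf (exp (rho (yn n))) (tn n) * aa)
        - 2 * (- Xf (exp (rho (yn n))) (tn n) * bb + Yf (exp (rho (yn n))) (tn n) * aa)) with 0 in G by ring.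
      unfold rr in G. rewrite Rmult_0_r in G. apply Rminus_diag_uniq in G. exact G. }
    assert (HB : 1 <= B) by (pose proof (Hbd 0%nat); pose proof (exp_pos (rho (yn 0%nat))); lra).
    assert (Hr : forall n, rho (yn n) <= ln B).
    { intro n. destruct (Hbd n) as [h _]. rewrite <- (ln_exp (rho (yn n))). left.
      apply ln_increasing. apply exp_pos. lra. }
    destruct (rho_interval y1 y2 rho Hy Hlim1 Hlim2 (ln B) (yn 0%nat) (HyI 0%nat))
      as [a' [b' [Ha' [Hb' [_ Hab]]]]].
    destruct (BW2 (fun n => (yn n, tn n)) (Rmax (Rmax (Rabs a') (Rabs b')) B)) as [phi [l1 [l2 [Hphi [L1 L2]]]]].
    { intro n. simpl. destruct (Hab _ (HyI n) (Hr n)). destruct (Hbd n). split.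
      - apply Rabs_le. pose proof (Rle_abs a'). pose proof (Rle_abs b').
        pose proof (Rabs_pos a'). pose proof (Rabs_pos b'). pose proof (Rle_abs (-a')). rewrite Rabs_Ropp in *.
        pose proof (Rmax_l (Rmax (Rabs a') (Rabs b')) B). pose proof (Rmax_l (Rabs a') (Rabs b')).
        pose proof (Rmax_r (Rabs a') (Rabs b')). split; lra.
      - apply Rle_trans with B; auto. apply Rmax_r. }
    simpl in L1, L2.
    assert (Hl1 : a' <= l1 <= b').
    { assert (Hab' : forall n, a' <= yn (phi n) <= b') by (intro n; apply (Hab _ (HyI _) (Hr _))).
      split.
      - pose proof (is_lim_seq_le (fun _ => a') (fun n => yn (phi n)) a' l1
          (fun n => proj1 (Hab' n)) (is_lim_seq_const _) L1) as HH. simpl in HH. exact HH.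
      - pose proof (is_lim_seq_le (fun n => yn (phi n)) (fun _ => b') l1 b'
          (fun n => proj2 (Hab' n)) L1 (is_lim_seq_const _)) as HH. simpl in HH. exact HH. }
    assert (Hl1I : in_I y1 y2 l1) by (apply (I_between y1 y2 a' b'); auto).
    destruct (f_cont y1 y2 rho D HD0 HD (fun n => yn (phi n)) (fun n => tn (phi n)) l1 l2
      (fun n => HyI (phi n)) Hl1I L1 L2) as [G1 [G2 G3]].
    assert (G1' : is_lim_seq (fun n => Defs.c1 (q (phi n))) (Defs.c1 (f_rho rho l1 l2)))
      by (apply (is_lim_seq_ext _ _ _ (fun n => f_equal Defs.c1 (Hfq (phi n))) G1)).
    assert (G2' : is_lim_seq (fun n => Defs.c2 (q (phi n))) (Defs.c2 (f_rho rho l1 l2)))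
      by (apply (is_lim_seq_ext _ _ _ (fun n => f_equal Defs.c2 (Hfq (phi n))) G2)).
    assert (G3' : is_lim_seq (fun n => Defs.c3 (q (phi n))) (Defs.c3 (f_rho rho l1 l2)))
      by (apply (is_lim_seq_ext _ _ _ (fun n => f_equal Defs.c3 (Hfq (phi n))) G3)).
    exists phi, (f_rho rho l1 l2). split; auto. split.
    + split. exists l1, l2; auto.
      unfold vplane, geodesic; simpl. split. apply H2R_f.
      set (X := Defs.c1 (f_rho rho l1 l2)). set (Y := Defs.c2 (f_rho rho l1 l2)).
      assert (HG : is_lim_seq (fun n => k * (Defs.c1 (q (phi n)) ^2 + Defs.c2 (q (phi n)) ^2 + 1) -
                             2 * (- Defs.c1 (q (phi n)) * bb + Defs.c2 (q (phi n)) * aa))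
                   (k * (X ^2 + Y ^2 + 1) - 2 * (- X * bb + Y * aa))).
      { lims. }
      assert (HG0 : is_lim_seq (fun n => k * (Defs.c1 (q (phi n)) ^2 + Defs.c2 (q (phi n)) ^2 + 1) -
                             2 * (- Defs.c1 (q (phi n)) * bb + Defs.c2 (q (phi n)) * aa)) 0).
      { apply (is_lim_seq_ext (fun _ => 0)). intro n; rewrite (Hgeo (phi n)); ring. apply is_lim_seq_const. }
      pose proof (lim_unique _ _ _ HG HG0). unfold k, bb, aa in H. lra.
    + split; [|split]; apply is_lim_seq_Reals; auto.
Qed.

(* rho is smooth on I: D n is its n-th derivative (D 0 = rho). *)
Theorem proposition4p1 (y1 y2 : option R) (Hy : ext_lt y1 y2)
  (rho : R -> R) (D : nat -> R -> R)
  (HD0 : forall y, in_I y1 y2 y -> D 0%nat y = rho y)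
  (HD : forall (n : nat) (y : R), in_I y1 y2 y ->
          derivable_pt_lim (D n) y (D (S n) y))
  (Hconvex : forall y, in_I y1 y2 y -> 0 < D 2%nat y)
  (Hlim1 : tends_infty_left y1 y2 rho)
  (Hlim2 : tends_infty_right y1 y2 rho) :
  let Dom := fun y t : R => in_I y1 y2 y in
  has_extrinsic_curvature Dom (f_rho rho)
    (fun y t => D 2%nat y / (1 + D 1%nat y ^ 2) ^ 2) /\
  (forall y t, Dom y t -> 0 < D 2%nat y / (1 + D 1%nat y ^ 2) ^ 2) /\
  properly_embedded Dom (f_rho rho) /\
  simple_end Dom (f_rho rho).
Proof.
  cbv zeta. split; [|split; [|split]].
  - apply (curv_part y1 y2 rho D); auto.
  - intros y t Hyt. apply Rdiv_lt_0_compat. apply Hconvex; auto. apply pow_lt. nra.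
  - apply (prop_emb y1 y2 rho D); auto.
  - apply (simple_end_part y1 y2 rho D); auto.
Qed.
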